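(* Let $E$ be a second countable Stone space and let $\gamma_1,\ldots,\gamma_k$ be pairwise compatible non-peripheral cuts of $E$. Then the graph $\big(L(\gamma_1)\cap\cdots\cap L(\gamma_k)\big)^\perp$ has at most $k+1$ connected components. Moreover, if it has exactly $k+1$ components, then: (1) no $\gamma_i$ is outermost; (2) no pair $\gamma_i,\gamma_j$ ($i\ne j$) is a peripheral pair; (3) for every triple of distinct indices $i,j,l$ such that the adjacency graph $A(\{\gamma_i,\gamma_j,\gamma_l\})$ is a triangle, one may write $\gamma_i=U_i\sqcup V_i$, $\gamma_j=U_j\sqcup V_j$, $\gamma_l=U_l\sqcup V_l$ so that $U_i\cap U_j=U_i\cap U_l=U_j\cap U_l=\varnothing$ and $V_i\cap V_j\cap V_l\ne\varnothing$.
   Context: A Stone space is a compact, Hausdorff, totally disconnected space. A cut of $E$ is an unordered partition of $E$ into two disjoint clopen sets $U,V$, written $U\sqcup V$; it is non-peripheral if each of $U,V$ contains at least two points, and outermost (if non-peripheral) when one side has exactly two points. Two cuts $U\sqcup V$, $U'\sqcup V'$ cross if all four sets $U\cap U'$, $U\cap V'$, $V\cap U'$, $V\cap V'$ are nonempty; otherwise they are compatible. The complex of cuts $\mathscr{C}(E)$ is the simplicial graph whose vertices are the non-peripheral cuts, with edges between distinct compatible cuts. Two distinct non-peripheral cuts form a peripheral pair if they are compatible and one of the four intersections above is a singleton. The link $L(\gamma)$ is the full subgraph of $\mathscr{C}(E)$ on the vertices adjacent to $\gamma$, and $L(\gamma_1)\cap\cdots\cap L(\gamma_k)$ is the full subgraph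 on the vertices adjacent to every $\gamma_i$. For a graph $L$, the opposite graph $L^\perp$ has the same vertices, with an edge between distinct vertices exactly when they are not adjacent in $L$. For a finite collection $\Gamma$ of pairwise compatible non-peripheral cuts, two cuts $\gamma,\gamma'\in\Gamma$ are adjacent if some non-peripheral cut crosses $\gamma$ and $\gamma'$ and no other cut of $\Gamma$; the adjacency graph $A(\Gamma)$ has vertex set $\Gamma$ and edges between adjacent cuts. *)

(* Defs.v *)
From HB Require Import structures.
From mathcomp Require Import all_boot all_order.
From mathcomp Require Import classical_sets boolp topology.
Set Implicit Arguments. Unset Strict Implicit. Unset Printing Implicit Defensive.
Local Open Scope classical_set_scope.

(* A cut U ⊔ V of E is represented by one of its sides U (a clopen set);
   the other side is ~` U.  Two representatives give the same (unordered) cut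
   iff they are equal or complementary. *)
Section Cuts.
Context {T : topologicalType}.

Definition Stone_space : Prop :=
  [/\ compact [set: T], hausdorff_space T & totally_disconnected [set: T]].

Definition is_cut (U : set T) : Prop := clopen U.

Definition same_cut (U V : set T) : Prop := U = V \/ U = ~` V.

Definition two_points (A : set T) : Prop :=
  exists x y : T, [/\ x <> y, A x & A y].

Definition nonperipheral (U : set T) : Prop :=
  [/\ is_cut U, two_points U & two_points (~` U)].

Definition outermost (U : set T) : Prop :=
  nonperipheral U /\
  exists x y : T, x <> y /\ (U = [set x; y] \/ ~` U = [set x; y]).

Definition crosses (U V : set T) : Prop :=
  [/\ U `&` V !=set0, U `&` ~` V !=set0, ~` U `&` V !=set0 & ~` U `&` ~` V !=set0].

Definition compatible (U V : set T) : Prop := ~ crosses U V.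

(* adjacency in the complex of cuts C(E): distinct compatible non-peripheral cuts *)
Definition cc_adj (U V : set T) : Prop :=
  [/\ nonperipheral U, nonperipheral V, ~ same_cut U V & compatible U V].

Definition is_singleton (A : set T) : Prop := exists x : T, A = [set x].

Definition peripheral_pair (U V : set T) : Prop :=
  [/\ nonperipheral U, nonperipheral V, ~ same_cut U V, compatible U V &
      [\/ is_singleton (U `&` V), is_singleton (U `&` ~` V),
          is_singleton (~` U `&` V) | is_singleton (~` U `&` ~` V)]].

(* vertices of L(g_1) ∩ ... ∩ L(g_k): cuts adjacent to every g_i *)
Definition link_vertex (k : nat) (g : 'I_k -> set T) (W : set T) : Prop :=
  nonperipheral W /\ forall i, cc_adj (g i) W.

(* edges of the opposite graph (L(g_1) ∩ ... ∩ L(g_k))^⊥ : distinct vertices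
   which are not adjacent in L, i.e. (both being non-peripheral) which cross *)
Definition opp_edge (k : nat) (g : 'I_k -> set T) (U V : set T) : Prop :=
  [/\ link_vertex g U, link_vertex g V, ~ same_cut U V & ~ cc_adj U V].

(* connectivity in the opposite graph, at the level of cuts (representatives
   of the same cut are identified) *)
Inductive opp_conn (k : nat) (g : 'I_k -> set T) : set T -> set T -> Prop :=
  | opp_conn_refl U V : link_vertex g U -> same_cut U V -> opp_conn g U V
  | opp_conn_step U V W : opp_edge g U V -> opp_conn g V W -> opp_conn g U W.

Definition at_most_components (k : nat) (g : 'I_k -> set T) (n : nat) : Prop :=
  forall f : 'I_n.+1 -> set T, (forall a, link_vertex g (f a)) ->
    exists a b : 'I_n.+1, a <> b /\ opp_conn g (f a) (f b).

Definition at_least_components (k : nat) (g : 'I_k -> set T) (n : nat) : Prop :=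
  exists f : 'I_n -> set T, (forall a, link_vertex g (f a)) /\
    forall a b : 'I_n, a <> b -> ~ opp_conn g (f a) (f b).

(* adjacency of cuts in the adjacency graph A(Γ) for Γ = {U, V, W}:
   U and V adjacent iff some non-peripheral cut crosses U and V and not W *)
Definition adj_in_triple (U V W : set T) : Prop :=
  exists X : set T, [/\ nonperipheral X, crosses X U, crosses X V & ~ crosses X W].

Definition is_triangle (U V W : set T) : Prop :=
  [/\ adj_in_triple U V W, adj_in_triple V W U & adj_in_triple U W V].

End Cuts.

(* Main.v *)
Require Import Defs.
From HB Require Import structures.
From mathcomp Require Import all_boot all_order.
From mathcomp Require Import classical_sets boolp topology.
Set Implicit Arguments. Unset Strict Implicit. Unset Printing Implicit Defensive.
Local Open Scope classical_set_scope.

Section Aux.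
Context {T : topologicalType}.
Implicit Types (U V W X A B C D G : set T).

Definition sd W (b : bool) : set T := if b then W else ~` W.
Definition disj A B := forall x, A x -> B x -> False.
Definition ne W := forall b, (sd W b) !=set0.
Definition sep G W1 W2 := exists b1 b2 c,
  sd W1 b1 `<=` sd G c /\ sd W2 b2 `<=` ~` sd G c.

Lemma sdN W b : sd W (~~ b) = ~` sd W b.
Proof. by case: b => //=; rewrite setCK. Qed.

Lemma nd A B : ~ disj A B -> (A `&` B) !=set0.
Proof.
move=> H; apply: contrapT => H'; apply: H => x Ax Bx; apply: H'; by exists x.
Qed.

Lemma crossesCl U V : crosses (~` U) V <-> crosses U V.
Proof.
rewrite /crosses setCK; split; case=> a b c d; split => //.
Qed.

Lemma crosses_sym U V : crosses U V <-> crosses V U.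
Proof.
rewrite /crosses; split; case=> a b c d; split;
  by rewrite setIC.
Qed.

Lemma crossesCr U V : crosses U (~` V) <-> crosses U V.
Proof. by rewrite crosses_sym crossesCl crosses_sym. Qed.

Lemma crosses_sd U V b c : crosses (sd U b) (sd V c) <-> crosses U V.
Proof. by case: b; case: c => /=; rewrite ?crossesCl ?crossesCr. Qed.

Lemma comp_cases U V : compatible U V ->
  [\/ disj U V, disj U (~` V), disj (~` U) V | disj (~` U) (~` V)].
Proof.
move=> H; apply: contrapT => H'; apply: H; split; apply: nd => D; apply: H'.
- exact: Or41.
- exact: Or42.
- exact: Or43.
- exact: Or44.
Qed.

Lemma disj_comp U V b c : disj (sd U b) (sd V c) -> compatible U V.
Proof.
move=> D Hc; have := (proj2 (crosses_sd U V b c) Hc); case=> [[x [Ux Vx]]] _ _ _.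
exact: (D x).
Qed.

Lemma comp_sides U V b c : compatible U V ->
  [\/ disj (sd U b) (sd V c), sd U b `<=` sd V c, sd V c `<=` sd U b |
      ~` sd U b `<=` sd V c].
Proof.
move=> H; have H2 : compatible (sd U b) (sd V c).
  by move=> Hc; apply: H; apply/(crosses_sd U V b c).
case: (comp_cases H2) => D.
- exact: Or41.
- apply: Or42 => x Ux; apply: contrapT => nV; exact: (D x).
- apply: Or43 => x Vx; apply: contrapT => nU; exact: (D x).
- apply: Or44 => x Ux; apply: contrapT => nV; exact: (D x).
Qed.

Lemma np_ne W : nonperipheral W -> ne W.
Proof.
case=> _ [x [y [_ Wx _]]] [x' [y' [_ Wx' _]]]; case; [by exists x | by exists x'].
Qed.

Lemma same_cut_sd W G b c : sd W b = sd G c -> same_cut W G.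
Proof.
rewrite /same_cut; case: b; case: c => /= E; rewrite ?E ?setCK; by [left|right|
  right; rewrite -E setCK | left; rewrite -(setCK W) E setCK].
Qed.


Lemma bool_cases (a b : bool) : b = a \/ b = ~~ a.
Proof. by case: a; case: b; auto. Qed.

Lemma setC_sub A B : A `<=` B -> ~` B `<=` ~` A.
Proof. by move=> H x nB Ax; apply: nB; apply: H. Qed.

Lemma side_unique W G b b' c c' : ne G -> ne W -> ~ same_cut W G ->
  sd W b `<=` sd G c -> sd W b' `<=` sd G c' -> c = c'.
Proof.
move=> nG nW nS H H'; case: (bool_cases c c') => Ec; first by [].
rewrite Ec in H'; exfalso; case: (bool_cases b b') => Eb; rewrite Eb in H'.
  have [x Hx] := nW b; have := H' _ Hx; have := H _ Hx; rewrite sdN; by [].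
rewrite !sdN in H'; apply: nS; apply: (@same_cut_sd W G b c).
apply/seteqP; split => // x Gx; apply: contrapT => nWx.
by have := H' _ nWx; apply.
Qed.

Lemma nosep1 G W1 W2 a1 a2 c : ne G -> ne W1 -> ne W2 ->
  ~ same_cut W1 G -> ~ same_cut W2 G ->
  sd W1 a1 `<=` sd G c -> sd W2 a2 `<=` sd G c -> ~ sep G W1 W2.
Proof.
move=> nG n1 n2 s1 s2 H1 H2 [b1 [b2 [d [K1 K2]]]].
rewrite -sdN in K2.
have e1 := side_unique nG n1 s1 H1 K1.
have e2 := side_unique nG n2 s2 H2 K2.
by move: e2; rewrite -e1; case: (c).
Qed.

Lemma nosep2 Dl C W1 W2 e a1 a2 : ne Dl -> ne W1 -> ne W2 ->
  sd Dl e `<=` ~` C -> sd W1 a1 `<=` C -> sd W2 a2 `<=` C ->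
  sep Dl W1 W2 -> ~` C `<=` sd Dl e.
Proof.
move=> nD n1 n2 HD H1 H2 [b1 [b2 [d [K1 K2]]]].
case: (bool_cases a1 b1) => Eb1; rewrite Eb1 ?sdN in K1;
case: (bool_cases e d) => Ed; rewrite Ed ?sdN in K1 K2.
- have [y Hy] := n1 a1; exfalso; exact: (HD _ (K1 _ Hy) (H1 _ Hy)).
- rewrite setCK in K2; case: (bool_cases a2 b2) => Eb2; rewrite Eb2 ?sdN in K2.
  + have [y Hy] := n2 a2; exfalso; exact: (HD _ (K2 _ Hy) (H2 _ Hy)).
  + move=> x nC; apply: K2 => A2; by apply: nC; apply: H2.
- move=> x nC; apply: K1 => A1; by apply: nC; apply: H1.
- have [y Hy] := nD e; exfalso; have := K1 y; apply.
  + move=> A1; by apply: (HD _ Hy); apply: H1.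
  + exact: Hy.
Qed.

Lemma comp_sub U V : compatible U V -> exists b c, sd U b `<=` sd V c.
Proof.
move=> H; case: (comp_sides true true H) => /= D.
- exists true, false => x Ux Vx; exact: (D x).
- by exists true, true.
- exists false, false; exact: setC_sub.
- by exists false, true.
Qed.

Lemma sep_eq G Ga W1 W2 e c0 : sd G e = sd Ga c0 -> sep G W1 W2 -> sep Ga W1 W2.
Proof.
move=> E [b1 [b2 [d [K1 K2]]]]; case: (bool_cases e d) => Ed; rewrite Ed in K1 K2.
- by exists b1, b2, c0; rewrite -E.
- by exists b1, b2, (~~ c0); rewrite sdN -E -sdN.
Qed.


Fixpoint lin (x : set T) (s : seq (set T)) : Prop :=
  match s with [::] => False | y :: s' => y = x \/ lin x s' end.

Fixpoint pw (r : set T -> set T -> Prop) (s : seq (set T)) : Prop :=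
  match s with [::] => True | x :: s' => (forall y, lin y s' -> r x y) /\ pw r s' end.

Lemma In_filter (p : pred (set T)) x s : lin x (seq.filter p s) <-> lin x s /\ p x.
Proof.
elim: s => [|y s IH] /=; first by split => [|[]].
case py: (p y) => /=; rewrite IH; split.
- by case=> [<-|[]]; auto.
- by case=> [[->|H] px]; auto.
- by case; auto.
- by case=> [[E|H] px]; [move: py; rewrite E px|auto].
Qed.

Lemma pw_filter r p s : pw r s -> pw r (seq.filter p s).
Proof.
elim: s => [|y s IH] //= [H1 H2]; case: (p y) => /=; last exact: IH.
split; last exact: IH.
by move=> z /In_filter [] /H1.
Qed.

Lemma pw_weak (r r' : set T -> set T -> Prop) s :
  (forall x y, lin x s -> lin y s -> r x y -> r' x y) -> pw r s -> pw r' s.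
Proof.
elim: s => [|y s IH] //= H [H1 H2]; split.
- move=> z Hz; apply: H; [by left|by right|exact: H1].
- apply: IH => // a b Ha Hb; apply: H; by right.
Qed.

Definition sepin gs W1 W2 := exists2 G, lin G gs & sep G W1 W2.

Lemma side_in W G : ne W -> compatible W G -> ~ (exists b, sd W b `<=` G) ->
  exists b, sd W b `<=` ~` G.
Proof.
move=> nW cWG nP; have [b [c H]] := comp_sub cWG; exists b.
by case: c H => /= H //; exfalso; apply: nP; exists b.
Qed.

Lemma count_nil ws : pw (sepin [::]) ws -> (size ws <= 1)%N.
Proof. by case: ws => [|x [|y s]] //= [H _]; have [G []] := H y (or_introl erefl). Qed.

Lemma count_sep n : forall gs ws, (size gs <= n)%N ->
 (forall G, lin G gs -> ne G) ->
 (forall G G', lin G gs -> lin G' gs -> compatible G G') ->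
 (forall W, lin W ws -> ne W) ->
 (forall W G, lin W ws -> lin G gs -> compatible W G /\ ~ same_cut W G) ->
 pw (sepin gs) ws -> (size ws <= (size gs).+1)%N.
Proof.
elim: n => [|n IH] [|ga gs] ws //= szn hne hcomp hwne hwc hpw; try exact: count_nil.
pose p := fun W : set T => `[< exists b, sd W b `<=` ga >].
pose q := fun W : set T => `[< exists b, sd W b `<=` ga >].
have nga : ne ga by apply: hne; left.
have Hga : forall W, lin W ws -> [/\ ne W, compatible W ga & ~ same_cut W ga].
  move=> W HW; have [? ?] := hwc W ga HW (or_introl erefl); split => //; exact: hwne.
have Hgs : forall G, lin G gs -> ne G /\ compatible G ga.
  by move=> G HG; split; [apply: hne; right|apply: hcomp; [right|left]].
have sz : size ws = (size (seq.filter p ws) + size (seq.filter (predC p) ws))%N.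
  by rewrite !size_filter count_predC.
have szg : size gs = (size (seq.filter q gs) + size (seq.filter (predC q) gs))%N.
  by rewrite !size_filter count_predC.
have szgn : (size gs <= n)%N by [].
have K1 : (size (seq.filter p ws) <= (size (seq.filter q gs)).+1)%N.
  apply: IH.
  - by rewrite size_filter (leq_trans (count_size _ _)).
  - by move=> G /In_filter [/Hgs []].
  - by move=> G G' /In_filter [HG _] /In_filter [HG' _]; apply: hcomp; right.
  - by move=> W /In_filter [/Hga []].
  - move=> W G /In_filter [HW _] /In_filter [HG _]; apply: hwc => //; by right.
  apply: (pw_weak _ (pw_filter p hpw)).
  move=> W W' /In_filter [/Hga [nW cW sW] /asboolP [a HW]]
              /In_filter [/Hga [nW' cW' sW'] /asboolP [a' HW']] [G HG sG].
  case: HG => [EG|HG].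
    by exfalso; subst G; apply: (nosep1 (c := true) nga nW nW' sW sW' HW HW' sG).
  have [nG cG] := Hgs G HG.
  case: (boolP (q G)) => qG; first by exists G => //; apply/In_filter.
  move/asboolPn: qG => nq; have [e He] := side_in nG cG nq; exfalso; apply: nq.
  have := nosep2 nG nW nW' He HW HW' sG => H.
  exists (~~ e); rewrite sdN => x nx; apply: contrapT => ngx; exact: (nx (H x ngx)).
have K2 : (size (seq.filter (predC p) ws) <= (size (seq.filter (predC q) gs)).+1)%N.
  apply: IH.
  - by rewrite size_filter (leq_trans (count_size _ _)).
  - by move=> G /In_filter [/Hgs []].
  - by move=> G G' /In_filter [HG _] /In_filter [HG' _]; apply: hcomp; right.
  - by move=> W /In_filter [/Hga []].
  - move=> W G /In_filter [HW _] /In_filter [HG _]; apply: hwc => //; by right.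
  apply: (pw_weak _ (pw_filter (predC p) hpw)).
  move=> W W' /In_filter [/Hga [nW cW sW] /asboolPn pW]
              /In_filter [/Hga [nW' cW' sW'] /asboolPn pW'] [G HG sG].
  have [a HW] := side_in nW cW pW.
  have [a' HW'] := side_in nW' cW' pW'.
  case: HG => [EG|HG].
    by exfalso; subst G; apply: (nosep1 (c := false) nga nW nW' sW sW' HW HW' sG).
  have [nG cG] := Hgs G HG.
  case: (boolP (q G)) => qG; last by exists G => //; apply/In_filter.
  exfalso; move/asboolP: qG => [e He].
  have He' : sd G e `<=` ~` ~` ga by rewrite setCK.
  have := nosep2 nG nW nW' He' HW HW' sG; rewrite setCK => H.
  have E : sd G e = sd ga true by apply/seteqP; split.
  exact: (nosep1 (c := false) nga nW nW' sW sW' HW HW' (sep_eq E sG)).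
rewrite sz szg; have := leq_add K1 K2; by rewrite !addSn !addnS.
Qed.


Lemma lmax (P : set T -> Prop) (s : seq (set T)) :
  (forall c, lin c s -> P c -> c !=set0) ->
  (forall c c', lin c s -> lin c' s -> P c -> P c' -> [\/ c `<=` c', c' `<=` c | disj c c']) ->
  (exists m, [/\ lin m s, P m & forall c, lin c s -> P c -> c `<=` m \/ disj c m]) \/
  (forall c, lin c s -> ~ P c).
Proof.
elim: s => [|h s IH] hne hrel; first by right.
have IH' := IH (fun c Hc => hne c (or_intror Hc))
  (fun c c' Hc Hc' => hrel c c' (or_intror Hc) (or_intror Hc')).
have [Ph|nPh] := pselect (P h); last first.
  case: IH' => [[m [Hm Pm Mm]]|Hn].
    left; exists m; split => //; first by right.
    by move=> c [<-|Hc] Pc; [exfalso; exact: nPh|exact: Mm].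
  by right => c [<-|Hc] //; exact: Hn.
case: IH' => [[m [Hm Pm Mm]]|Hn]; last first.
  by left; exists h; split => //; [left|move=> c [<-|Hc] Pc; [left|exfalso; exact: (Hn c)]].
case: (hrel h m (or_introl erefl) (or_intror Hm) Ph Pm) => R.
- left; exists m; split => //; [by right|].
  by move=> c [<-|Hc] Pc; [left|exact: Mm].
- left; exists h; split => //; [by left|].
  move=> c [<-|Hc] Pc; first by left.
  case: (Mm c Hc Pc) => Hcm; first by left => x /Hcm /R.
  case: (hrel c h (or_intror Hc) (or_introl erefl) Pc Ph) => R2.
  + by left.
  + exfalso; have [y my] := hne m (or_intror Hm) Pm; exact: (Hcm y (R2 _ (R _ my)) my).
  + by right.
- left; exists m; split => //; [by right|].
  by move=> c [<-|Hc] Pc; [right|exact: Mm].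
Qed.

Fixpoint sides (gs : seq (set T)) : seq (set T) :=
  match gs with [::] => [::] | G :: gs => G :: ~` G :: sides gs end.

Lemma lin_sides c gs : lin c (sides gs) <-> exists G e, lin G gs /\ c = sd G e.
Proof.
elim: gs c => [|G gs IH] c /=; first by split => // [[G [e []]]].
split.
- case=> [E|[E|H]].
  + by exists G, true; rewrite -E; auto.
  + by exists G, false; rewrite -E; auto.
  + have [G' [e [H1 H2]]] := proj1 (IH _) H; by exists G', e; auto.
- case=> [G' [e [[E|H1] ->]]]; last first.
    right; right; apply: (proj2 (IH _)); by exists G', e.
  by rewrite -E; case: e; auto.
Qed.

Lemma side_props W a : nonperipheral W ->
  [/\ clopen (sd W a), two_points (sd W a) & (~` sd W a) !=set0].
Proof.
move=> nW; have nn := np_ne nW; case: nW => cW t1 t2.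
split.
- by case: a => //=; apply: clopenC.
- by case: a.
- by rewrite -sdN; apply: nn.
Qed.

Lemma inner (A : set T) (gs : seq (set T)) :
 totally_disconnected [set: T] -> clopen A -> two_points A -> (~` A) !=set0 ->
 (forall G, lin G gs -> nonperipheral G) ->
 (forall G G', lin G gs -> lin G' gs -> compatible G G') ->
 (forall G e, lin G gs -> sd G e `<=` A -> ~ (A `<=` sd G e)) ->
 exists XA, [/\ clopen XA, XA `<=` A, XA !=set0, (A `&` ~` XA) !=set0 &
   forall G e, lin G gs -> sd G e `<=` A -> sd G e `<=` XA \/ disj (sd G e) XA].
Proof.
move=> td cA [x [y [xy Ax Ay]]] [z nAz] hnp hcomp hsub.
have := @lmax (fun c => c `<=` A) (sides gs).
case.
- move=> c /lin_sides [G [e [HG ->]]] _; exact: (np_ne (hnp G HG)).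
- move=> c c' /lin_sides [G [e [HG ->]]] /lin_sides [G' [e' [HG' ->]]] Pc Pc'.
  case: (comp_sides e e' (hcomp G G' HG HG')) => R.
  + exact: Or33.
  + exact: Or31.
  + exact: Or32.
  + exfalso; apply: (nAz); apply: Pc'; apply: R => Hz; exact: (nAz (Pc _ Hz)).
- move=> [m [/lin_sides [G [e [HG ->]]] Pm Mm]].
  exists (sd G e); split => //.
  + by have [] := side_props e (hnp G HG).
  + exact: (np_ne (hnp G HG) e).
  + apply: contrapT => H; apply: (hsub G e HG Pm) => w Aw.
    by apply: contrapT => nw; apply: H; exists w.
  + move=> G' e' HG' P'; apply: Mm => //; apply/lin_sides; by exists G', e'.
- move=> Hn.
  have nc : ~ connected A.
    move=> cnA; have := connected_component_max Ax (@subsetT _ A) cnA.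
    rewrite (td x Logic.I) => /(_ y Ay) /= yx; exact: xy (esym yx).
  apply: contrapT => H; apply: nc => B Bne [C1 oC1 E1] [C2 cC2 E2].
  apply: contrapT => BA; apply: H; exists B; split => //.
  + split; [rewrite E1; apply: openI => //; exact: cA.1|
            rewrite E2; apply: closedI => //; exact: cA.2].
  + by rewrite E1 => w [].
  + apply: contrapT => H; apply: BA; apply/seteqP; split; first by rewrite E1 => w [].
    by move=> w Aw; apply: contrapT => nw; apply: H; exists w.
  + move=> G e HG Hs; exfalso; apply: (Hn (sd G e)) => //.
    by apply/lin_sides; exists G, e.
Qed.


Lemma sub_comp G X e : sd G e `<=` X -> compatible G X.
Proof.
move=> H Hc; have := proj2 (crosses_sd G X e true) Hc.
by case=> _ [x [Gx nXx]] _ _; apply: nXx; apply: H.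
Qed.

Lemma same_nocross G X W : same_cut G X -> compatible G W -> ~ crosses W X.
Proof.
move=> [->|->] cGW Hc; apply: cGW; apply/crosses_sym => //.
by apply/crossesCr.
Qed.

Lemma disj_side G W a : compatible G W -> ~ (exists e, sd G e `<=` sd W a) ->
  exists c, disj (sd G c) (sd W a).
Proof.
move=> cGW nE; case: (comp_sides true a cGW) => /= R.
- by exists true.
- by exfalso; apply: nE; exists true.
- exists false => x nGx Ax; exact: nGx (R _ Ax).
- by exfalso; apply: nE; exists false.
Qed.

Lemma cross_not_same W X : crosses W X -> ~ same_cut W X.
Proof.
move=> Hc [E|E]; subst W.
- by case: Hc => _ [x [? ?]].
- by case: Hc => [[x [? ?]]].
Qed.

Lemma build_X gs W W' :
 totally_disconnected [set: T] ->
 (forall G, lin G gs -> nonperipheral G) ->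
 (forall G G', lin G gs -> lin G' gs -> compatible G G') ->
 nonperipheral W -> nonperipheral W' ->
 (forall G, lin G gs -> compatible G W /\ ~ same_cut G W) ->
 (forall G, lin G gs -> compatible G W' /\ ~ same_cut G W') ->
 compatible W W' -> ~ sepin gs W W' ->
 exists X, [/\ nonperipheral X,
   (forall G, lin G gs -> compatible G X /\ ~ same_cut G X), crosses W X & crosses W' X].
Proof.
move=> td hnp hcomp npW npW' hW hW' cWW' nsep.
have [a [b dAB]] : exists a b, disj (sd W a) (sd W' b).
  case: (comp_cases cWW') => D; [exists true, true|exists true, false|
    exists false, true|exists false, false] => //.
have [cA tA nA] := side_props a npW.
have [cB tB nB] := side_props b npW'.
have hsA : forall G e, lin G gs -> sd G e `<=` sd W a -> ~ (sd W a `<=` sd G e).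
  move=> G e HG H1 H2; apply: (proj2 (hW G HG)); apply: (@same_cut_sd G W e a).
  by apply/seteqP; split.
have hsB : forall G e, lin G gs -> sd G e `<=` sd W' b -> ~ (sd W' b `<=` sd G e).
  move=> G e HG H1 H2; apply: (proj2 (hW' G HG)); apply: (@same_cut_sd G W' e b).
  by apply/seteqP; split.
have [XA [cXA sXA [a1 Xa1] [a2 [Aa2 nXa2]] rA]] := inner td cA tA nA hnp hcomp hsA.
have [XB [cXB sXB [b1 Xb1] [b2 [Bb2 nXb2]] rB]] := inner td cB tB nB hnp hcomp hsB.
pose X := XA `|` XB.
have Aa1 := sXA _ Xa1.
have Bb1 := sXB _ Xb1.
have nXa2' : ~ X a2 by case=> // /sXB Hb; exact: (dAB a2).
have nXb2' : ~ X b2 by case=> // /sXA Ha; exact: (dAB b2).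
have cross1 : crosses W X.
  apply/(crosses_sd W X a true) => /=; split.
  - by exists a1; split => //; left.
  - by exists a2.
  - by exists b1; split; [move=> Ha; exact: (dAB b1)|right].
  - by exists b2; split => // Ha; exact: (dAB b2).
have cross2 : crosses W' X.
  apply/(crosses_sd W' X b true) => /=; split.
  - by exists b1; split => //; right.
  - by exists b2.
  - by exists a1; split; [move=> Hb; exact: (dAB a1)|left].
  - by exists a2; split => // Hb; exact: (dAB a2).
have compX : forall G, lin G gs -> compatible G X.
  move=> G HG.
  have [[e He]|nEA] := pselect (exists e, sd G e `<=` sd W a).
    case: (rA G e HG He) => R.
      by apply: (sub_comp (e := e)) => x /R; left.
    apply: (disj_comp (b := e) (c := true)) => x Gx /= [/(R x Gx)//|/sXB Bx].
    exact: (dAB x (He _ Gx)).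
  have [[e He]|nEB] := pselect (exists e, sd G e `<=` sd W' b).
    case: (rB G e HG He) => R.
      by apply: (sub_comp (e := e)) => x /R; right.
    apply: (disj_comp (b := e) (c := true)) => x Gx /= [/sXA Ax|/(R x Gx)//].
    exact: (dAB x Ax (He _ Gx)).
  have [c Dc] := disj_side (proj1 (hW G HG)) nEA.
  have [d Dd] := disj_side (proj1 (hW' G HG)) nEB.
  case: (bool_cases c d) => Ed.
    subst d; apply: (disj_comp (b := c) (c := true)) => x Gx /= [/sXA Ax|/sXB Bx].
    + exact: (Dc x Gx Ax).
    + exact: (Dd x Gx Bx).
  exfalso; apply: nsep; exists G => //; exists a, b, d; split.
  - move=> x Ax; rewrite Ed sdN => Gx; exact: (Dc x Gx Ax).
  - move=> x Bx Gx; exact: (Dd x Gx Bx).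
exists X; split.
- split; first exact: clopenU.
  + exists a1, b1; split; [move=> E; subst b1; exact: (dAB a1)|by left|by right].
  + exists a2, b2; split => //; move=> E; subst b2; exact: (dAB a2).
- move=> G HG; split; first exact: compX.
  move=> sGX; exact: (same_nocross sGX (proj1 (hW G HG)) cross1).
- exact: cross1.
- exact: cross2.
Qed.


Lemma lin_map (I : eqType) (f : I -> set T) (s : seq I) G :
  lin G (map f s) <-> exists2 i, i \in s & f i = G.
Proof.
elim: s => [|x s IH] /=; first by split => // [[i]].
split.
- case=> [E|/IH [i Hi E]]; first by exists x => //; rewrite inE eqxx.
  by exists i => //; rewrite inE Hi orbT.
- case=> i; rewrite inE => /orP [/eqP ->|Hi] E; first by left.
  by right; apply/IH; exists i.
Qed.

Lemma pw_map (I : eqType) r (f : I -> set T) s : uniq s ->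
  (forall i j, i \in s -> j \in s -> i != j -> r (f i) (f j)) -> pw r (map f s).
Proof.
elim: s => [|x s IH] //= /andP [nx us] H; split.
- move=> y /lin_map [j Hj <-]; apply: H.
  + by rewrite inE eqxx.
  + by rewrite inE Hj orbT.
  + by apply: contraNneq nx => ->.
- apply: IH => // i j Hi Hj; apply: H; by rewrite inE ?Hi ?Hj orbT.
Qed.

Lemma sep_sym G W1 W2 : sep G W1 W2 -> sep G W2 W1.
Proof.
move=> [b1 [b2 [c [H1 H2]]]]; exists b2, b1, (~~ c); rewrite sdN setCK; by split.
Qed.

Lemma same_cut_sym U V : same_cut U V -> same_cut V U.
Proof. by case=> ->; [left|right; rewrite setCK]. Qed.

Lemma compatible_sym U V : compatible U V -> compatible V U.
Proof. by move=> H /crosses_sym. Qed.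

Lemma chain X P Q R : crosses X P -> crosses X R -> P `<=` Q -> Q `<=` R -> crosses X Q.
Proof.
move=> [[x1 [? ?]] [x2 [? ?]] [x3 [? ?]] [x4 [? ?]]]
       [[y1 [? ?]] [y2 [? ?]] [y3 [? ?]] [y4 [? ?]]] PQ QR; split.
- by exists x1; split => //; apply: PQ.
- by exists y2; split => // /QR.
- by exists x3; split => //; apply: PQ.
- by exists y4; split => // /QR.
Qed.


Lemma tp_single W b p : nonperipheral W -> ~ (sd W b `<=` [set p]).
Proof.
move=> nW H; have [_ [u [v [uv Hu Hv]]] _] := side_props b nW.
by apply: uv; rewrite (H _ Hu) (H _ Hv).
Qed.

Lemma pair_side W G b e x y : nonperipheral W -> ~ same_cut W G ->
  sd G e = [set x; y] -> ~ (sd W b `<=` sd G e).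
Proof.
move=> nW nS E H; have [_ [u [v [uv Hu Hv]]] _] := side_props b nW.
apply: nS; apply: (@same_cut_sd W G b e); apply/seteqP; split => // z.
have Hu' := H _ Hu; have Hv' := H _ Hv; rewrite E in Hu' Hv' *.
case: Hu' => Eu; case: Hv' => Ev; rewrite /set1 /= in Eu Ev; subst u v => //;
  case=> Ez; rewrite /set1 /= in Ez; by subst z.
Qed.

Lemma outer_nosep G W1 W2 : outermost G -> nonperipheral W1 -> nonperipheral W2 ->
  ~ same_cut W1 G -> ~ same_cut W2 G -> ~ sep G W1 W2.
Proof.
move=> [nG [x [y [xy HE]]]] n1 n2 s1 s2 [b1 [b2 [c [H1 H2]]]].
have [e0 E0] : exists e0, sd G e0 = [set x; y].
  by case: HE => E; [exists true|exists false].
case: (bool_cases e0 c) => Ec.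
- by apply: (pair_side (b := b1) n1 s1 E0); rewrite -Ec.
- rewrite -sdN Ec negbK in H2; exact: (pair_side (b := b2) n2 s2 E0 H2).
Qed.

Lemma pp_sub Gi Gj ci cj p W1 W2 a1 a2 :
  nonperipheral W2 -> compatible W2 Gj -> ~ same_cut W2 Gi -> ~ same_cut W2 Gj ->
  (forall x, sd Gi ci x -> sd Gj cj x -> x = p) -> ~` sd Gi ci `<=` sd Gj cj ->
  sd W1 a1 `<=` ~` sd Gi ci -> sd W2 a2 `<=` sd Gi ci -> sep Gj W1 W2.
Proof.
move=> n2 c2 s2i s2j pin cov H1 H2.
have [s [t Hst]] := comp_sub c2.
case: (bool_cases cj t) => Et; last first.
  exists a1, s, cj; split; first by move=> x /H1 /cov.
  by rewrite -sdN -Et.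
rewrite Et in Hst.
case: (bool_cases a2 s) => Es; rewrite Es in Hst.
  exfalso; by apply: (tp_single (p := p) (b := a2) n2) => x Hx; apply: pin; [apply: H2|apply: Hst].
rewrite sdN in Hst.
have [Pin|nPin] := pselect (sd W2 a2 p).
- exfalso; apply: s2i; apply: (@same_cut_sd W2 Gi a2 ci); apply/seteqP; split => // x Gx.
  have [Gjx|nGjx] := pselect (sd Gj cj x); first by rewrite (pin x Gx Gjx).
  by apply: contrapT => nx; apply: nGjx; apply: Hst.
- exfalso; apply: s2j; apply: (@same_cut_sd W2 Gj a2 (~~ cj)); rewrite sdN.
  apply/seteqP; split => x.
  + move=> Hx Gjx; apply: nPin; rewrite -(pin x (H2 _ Hx) Gjx) //.
  + by move=> nGj; apply: contrapT => nx; apply: nGj; apply: Hst.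
Qed.


Lemma pp_drop Gi Gj ci cj p W1 W2 :
  nonperipheral Gi -> nonperipheral Gj -> compatible Gi Gj ->
  sd Gi ci `&` sd Gj cj = [set p] ->
  nonperipheral W1 -> compatible W1 Gj -> ~ same_cut W1 Gi -> ~ same_cut W1 Gj ->
  nonperipheral W2 -> compatible W2 Gj -> ~ same_cut W2 Gi -> ~ same_cut W2 Gj ->
  sep Gi W1 W2 -> sep Gj W1 W2.
Proof.
move=> nGi nGj cij E n1 c1 s1i s1j n2 c2 s2i s2j [b1 [b2 [d [H1 H2]]]].
have pin : forall x, sd Gi ci x -> sd Gj cj x -> x = p.
  move=> x Hi Hj; have H : (sd Gi ci `&` sd Gj cj) x by split.
  by rewrite E in H.
have [Pi Pj] : sd Gi ci p /\ sd Gj cj p.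
  have H : (sd Gi ci `&` sd Gj cj) p by rewrite E.
  exact: H.
have cov : ~` sd Gi ci `<=` sd Gj cj.
  case: (comp_sides ci cj cij) => R //.
  - by exfalso; exact: (R p Pi Pj).
  - by exfalso; apply: (tp_single (p := p) (b := ci) nGi) => x Hx; apply: pin => //; apply: R.
  - by exfalso; apply: (tp_single (p := p) (b := cj) nGj) => x Hx; apply: pin => //; apply: R.
case: (bool_cases ci d) => Ed; rewrite Ed in H1 H2.
- apply: sep_sym; exact: (pp_sub n1 c1 s1i s1j pin cov H2 H1).
- rewrite sdN setCK in H2; rewrite sdN in H1.
  exact: (pp_sub n2 c2 s2i s2j pin cov H1 H2).
Qed.

Lemma star U V Wc : compatible U V -> compatible U Wc -> compatible V Wc ->
  is_triangle U V Wc ->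
  exists a b c, [/\ disj (sd U a) (sd V b), disj (sd U a) (sd Wc c) & disj (sd V b) (sd Wc c)].
Proof.
move=> cUV cUW cVW [[X1 [_ x1U x1V nx1W]] [X2 [_ x2V x2W nx2U]] [X3 [_ x3U x3W nx3V]]].
have [a [b dAB]] : exists a b, disj (sd U a) (sd V b).
  case: (comp_cases cUV) => D; [exists true, true|exists true, false|
    exists false, true|exists false, false] => //.
have AnB : sd U a `<=` ~` sd V b by move=> x Ax Bx; exact: (dAB x Ax Bx).
have BnA : sd V b `<=` ~` sd U a by move=> x Bx Ax; exact: (dAB x Ax Bx).
have cX : forall X G e, crosses X G -> crosses X (sd G e).
  by move=> X G e H; apply/(crosses_sd X G true e).
have [[e He]|nA] := pselect (exists e, sd Wc e `<=` sd U a).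
  exfalso; apply: nx2U; apply/(crosses_sd X2 U true a) => /=.
  apply: (chain (cX _ _ e x2W) _ He AnB).
  by rewrite -sdN; apply: cX.
have [[e He]|nB] := pselect (exists e, sd Wc e `<=` sd V b).
  exfalso; apply: nx3V; apply/(crosses_sd X3 V true b) => /=.
  apply: (chain (cX _ _ e x3W) _ He BnA).
  by rewrite -sdN; apply: cX.
have [c Dc] := disj_side (compatible_sym cUW) nA.
have [d Dd] := disj_side (compatible_sym cVW) nB.
case: (bool_cases c d) => Ed.
  subst d; exists a, b, c; split => // x Hx Hy; [exact: (Dc x Hy Hx)|exact: (Dd x Hy Hx)].
exfalso; apply: nx1W; apply/(crosses_sd X1 Wc true d) => /=.
apply: (chain (cX _ _ a x1U) (cX _ _ (~~ b) x1V)).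
- move=> x Ax; rewrite Ed sdN => Cx; exact: (Dc x Cx Ax).
- move=> x Dx; rewrite sdN => Bx; exact: (Dd x Dx Bx).
Qed.


Lemma star_sub Gi Gj Gl a b c Wx Wy ax ay :
  disj (sd Gi a) (sd Gj b) -> disj (sd Gi a) (sd Gl c) -> disj (sd Gj b) (sd Gl c) ->
  (forall x, [\/ sd Gi a x, sd Gj b x | sd Gl c x]) ->
  compatible Wy Gj -> compatible Wy Gl -> ~ same_cut Wy Gi ->
  sd Wx ax `<=` sd Gi a -> sd Wy ay `<=` ~` sd Gi a ->
  sep Gj Wx Wy \/ sep Gl Wx Wy.
Proof.
move=> dij dil djl cov cj cl si Hx Hy.
have [[s Hs]|nB] := pselect (exists s, sd Wy s `<=` sd Gj b).
  left; exists ax, s, (~~ b); rewrite sdN setCK; split => //.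
  by move=> x /Hx Ax Bx; exact: (dij x Ax Bx).
have [[s Hs]|nC] := pselect (exists s, sd Wy s `<=` sd Gl c).
  right; exists ax, s, (~~ c); rewrite sdN setCK; split => //.
  by move=> x /Hx Ax Cx; exact: (dil x Ax Cx).
exfalso.
have [s [t Hst]] := comp_sub cj.
have [s' [t' Hst']] := comp_sub cl.
case: (bool_cases b t) => Et; first by apply: nB; exists s; rewrite -Et.
case: (bool_cases c t') => Et'; first by apply: nC; exists s'; rewrite -Et'.
rewrite Et sdN in Hst; rewrite Et' sdN in Hst'.
case: (bool_cases ay s) => Es; rewrite Es in Hst.
  apply: nC; exists ay => x Yx; case: (cov x) => H //; exfalso; [exact: (Hy _ Yx H)|exact: (Hst _ Yx H)].
case: (bool_cases ay s') => Es'; rewrite Es' in Hst'.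
  apply: nB; exists ay => x Yx; case: (cov x) => H //; exfalso; [exact: (Hy _ Yx H)|exact: (Hst' _ Yx H)].
rewrite sdN in Hst Hst'.
apply: si; apply: (@same_cut_sd Wy Gi ay (~~ a)); rewrite sdN; apply/seteqP; split => // x nA.
apply: contrapT => nY; case: (cov x) => H; [exact: (nA H)|exact: (Hst _ nY H)|exact: (Hst' _ nY H)].
Qed.

Lemma star_drop Gi Gj Gl a b c W1 W2 :
  disj (sd Gi a) (sd Gj b) -> disj (sd Gi a) (sd Gl c) -> disj (sd Gj b) (sd Gl c) ->
  (forall x, [\/ sd Gi a x, sd Gj b x | sd Gl c x]) ->
  compatible W1 Gj -> compatible W1 Gl -> ~ same_cut W1 Gi ->
  compatible W2 Gj -> compatible W2 Gl -> ~ same_cut W2 Gi ->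
  sep Gi W1 W2 -> sep Gj W1 W2 \/ sep Gl W1 W2.
Proof.
move=> dij dil djl cov c1j c1l s1 c2j c2l s2 [b1 [b2 [d [H1 H2]]]].
case: (bool_cases a d) => Ed; rewrite Ed in H1 H2.
- exact: (star_sub dij dil djl cov c2j c2l s2 H1 H2).
- rewrite sdN setCK in H2; rewrite sdN in H1.
  by case: (star_sub dij dil djl cov c1j c1l s1 H2 H1) => H; [left|right]; apply: sep_sym.
Qed.

End Aux.

Unset Implicit Arguments.
Set Strict Implicit.
Theorem mainTheorem11 (T : topologicalType) (k : nat) (g : 'I_k -> set T) :
  @Stone_space T -> @second_countable T ->
  (forall i, nonperipheral (g i)) ->
  (forall i j, compatible (g i) (g j)) ->
  at_most_components g k.+1 /\
  (at_least_components g k.+1 ->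
     [/\ (forall i, ~ outermost (g i)),
         (forall i j, i != j -> ~ peripheral_pair (g i) (g j)) &
         (forall i j l, i != j -> i != l -> j != l ->
            is_triangle (g i) (g j) (g l) ->
            exists Ui Uj Ul : set T,
              [/\ same_cut Ui (g i), same_cut Uj (g j), same_cut Ul (g l),
                  [/\ Ui `&` Uj = set0, Ui `&` Ul = set0 & Uj `&` Ul = set0] &
                  ~` Ui `&` ~` Uj `&` ~` Ul !=set0])]).
Proof.
move=> [_ _ td] _ hnp hcomp.
pose gs := map g (enum 'I_k).
have ling : forall G, lin G gs <-> exists i, g i = G.
  move=> G; rewrite /gs lin_map; split; first by case=> i _ E; exists i.
  by case=> i E; exists i => //; rewrite mem_enum.
have hnpG : forall G, lin G gs -> nonperipheral G.
  by move=> G /ling [i <-].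
have hcompG : forall G G', lin G gs -> lin G' gs -> compatible G G'.
  by move=> G G' /ling [i <-] /ling [j <-].
have linkP : forall W, link_vertex g W ->
    nonperipheral W /\ forall G, lin G gs -> compatible G W /\ ~ same_cut G W.
  move=> W [nW HW]; split => // G /ling [i <-]; by case: (HW i).
have keysep : forall W W', link_vertex g W -> link_vertex g W' ->
    ~ opp_conn g W W' -> sepin gs W W'.
  move=> W W' lW lW' nc; apply: contrapT => ns; apply: nc.
  have [sW|nsW] := pselect (same_cut W W'); first exact: opp_conn_refl.
  have [cr|ncr] := pselect (crosses W W').
    apply: (@opp_conn_step _ _ _ W W' W'); last by apply: opp_conn_refl => //; left.
    by split => // [[_ _ _]]; apply.
  have [npW hW] := linkP W lW.
  have [npW' hW'] := linkP W' lW'.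
  have [X [npX hX c1 c2]] := build_X td hnpG hcompG npW npW' hW hW' ncr ns.
  have lX : link_vertex g X.
    split => // i; have [cX sX] := hX (g i) (proj2 (ling _) (ex_intro _ i erefl)).
    by split.
  apply: (@opp_conn_step _ _ _ W X W').
    split => //; first exact: cross_not_same.
    by case=> _ _ _; apply.
  apply: (@opp_conn_step _ _ _ X W' W'); last by apply: opp_conn_refl => //; left.
  split => //.
  - by move=> /same_cut_sym; apply: cross_not_same.
  - by case=> _ _ _; apply; apply/crosses_sym.
have cnt : forall gs' n (f : 'I_n -> set T), (forall G, lin G gs' -> lin G gs) ->
    (forall a, link_vertex g (f a)) ->
    (forall a b, a <> b -> sepin gs' (f a) (f b)) -> (n <= (size gs').+1)%N.
  move=> gs' n f sub hf hs.
  have := @count_sep T (size gs') gs' (map f (enum 'I_n)) (leqnn _).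
  rewrite size_map size_enum_ord; apply.
  - by move=> G /sub /hnpG /np_ne.
  - by move=> G G' /sub H /sub H'; apply: hcompG.
  - by move=> W /lin_map [a _ <-]; apply: np_ne; case: (hf a).
  - move=> W G /lin_map [a _ <-] /sub HG; have [_ H] := linkP _ (hf a).
    have [c s] := H G HG; split; first exact: compatible_sym.
    by move=> /same_cut_sym.
  - apply: pw_map; first exact: enum_uniq.
    by move=> a b _ _ ab; apply: hs => E; move: ab; rewrite E eqxx.
have szgs : size gs = k by rewrite size_map size_enum_ord.
split.
  move=> f hf; apply: contrapT => H.
  have Hp : forall a b, a <> b -> sepin gs (f a) (f b).
    move=> a b ab; apply: keysep => // C; apply: H.
    by exists a, b.
  have := cnt gs k.+2 f (fun G H => H) hf Hp.
  by rewrite szgs ltnn.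
move=> [f [hf hnc]].
have sepf : forall a b, a <> b -> sepin gs (f a) (f b).
  by move=> a b ab; apply: keysep => //; apply: hnc.
have drop : forall i : 'I_k, (forall a b, a <> b -> sep (g i) (f a) (f b) ->
    exists2 j, j != i & sep (g j) (f a) (f b)) -> False.
  move=> i Hd; pose gs' := map g (enum (predC1 i)).
  have lin' : forall j, j != i -> lin (g j) gs'.
    by move=> j ji; apply/lin_map; exists j => //; rewrite mem_enum.
  have sub : forall G, lin G gs' -> lin G gs.
    by move=> G /lin_map [j _ <-]; apply/ling; exists j.
  have Hp : forall a b, a <> b -> sepin gs' (f a) (f b).
    move=> a b ab; have [G /ling [j <-] sG] := sepf a b ab.
    have [ji|ji] := eqVneq j i.
      subst j; have [j' j'i s'] := Hd a b ab sG; exists (g j') => //; exact: lin' j'i.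
    by exists (g j) => //; apply: lin'.
  have := cnt gs' k.+1 f sub hf Hp.
  have -> : size gs' = k.-1 by rewrite size_map -cardE cardC1 card_ord.
  have k0 : (0 < k)%N by apply: (leq_ltn_trans (leq0n i) (ltn_ord i)).
  by rewrite prednK // ltnn.
have fnp : forall a, nonperipheral (f a) by move=> a; case: (hf a).
have fc : forall a i, compatible (f a) (g i) /\ ~ same_cut (f a) (g i).
  move=> a i; have [_ H] := linkP _ (hf a); have [c s] := H (g i) (proj2 (ling _) (ex_intro _ i erefl)).
  split; [exact: compatible_sym|by move=> /same_cut_sym].
split.
- move=> i oi; apply: (drop i) => a b ab s; exfalso.
  exact: (outer_nosep oi (fnp a) (fnp b) (proj2 (fc a i)) (proj2 (fc b i)) s).
- move=> i j ij [npi npj _ cij sing]; apply: (drop i) => a b ab s.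
  exists j; first by rewrite eq_sym.
  have [ci [cj [p E]]] : exists ci cj p, sd (g i) ci `&` sd (g j) cj = [set p].
    by case: sing => [[p E]|[p E]|[p E]|[p E]]; [exists true, true|exists true, false|
      exists false, true|exists false, false]; exists p.
  exact: (pp_drop npi npj cij E (fnp a) (proj1 (fc a j)) (proj2 (fc a i)) (proj2 (fc a j))
    (fnp b) (proj1 (fc b j)) (proj2 (fc b i)) (proj2 (fc b j)) s).
- move=> i j l ij il jl tri.
  have [a [b [c [dij dil djl]]]] := star (hcomp i j) (hcomp i l) (hcomp j l) tri.
  have scd : forall (G : set T) (e : bool), same_cut (sd G e) G by move=> G [] /=; [left|right].
  have dz : forall A B : set T, disj A B -> A `&` B = set0.
    by move=> A B D; apply/seteqP; split => // x [Ax Bx]; exact: (D x Ax Bx).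
  exists (sd (g i) a), (sd (g j) b), (sd (g l) c); split => //.
  + by split; apply: dz.
  + apply: contrapT => nE; apply: (drop i) => a' b' ab s.
    have cov : forall x, [\/ sd (g i) a x, sd (g j) b x | sd (g l) c x].
      move=> x; apply: contrapT => nx; apply: nE; exists x.
      by split; [split|] => H; apply: nx; [apply: Or31|apply: Or32|apply: Or33].
    case: (star_drop dij dil djl cov (proj1 (fc a' j)) (proj1 (fc a' l)) (proj2 (fc a' i))
             (proj1 (fc b' j)) (proj1 (fc b' l)) (proj2 (fc b' i)) s) => H.
    * by exists j => //; rewrite eq_sym.
    * by exists l => //; rewrite eq_sym.
Qed.
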